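(* Let $F$ be an infinite field (e.g. $\mathbb{R}$ or $\mathbb{C}$), let $V$ be a vector space over $F$, and let $n\ge 1$. A widget with $n$ pairs in $V$ is valid if and only if it is full and contains a legal subwidget.
   Context: A widget with $n$ pairs in $V$ is an indexed family of $n$ pairs of vectors $p_i=(p_i^+,p_i^-)$, $i=1,\dots,n$, in $V$ (the vectors $p_i^+,p_i^-$ are called the points of the pair $p_i$). A section of a widget is a set of points containing at most one point from each pair. A widget with $n$ pairs is legal if every section spans a linear subspace of $V$ of dimension at most $n-1$. A widget with $n$ pairs is full if the linear span of all its $2n$ points has dimension at least $n$. A widget is valid if it is both legal and full. A subwidget of a widget with $n$ pairs is the widget formed by some $k$ of its pairs with $1\le k<n$; it is itself a widget with $k$ pairs, so it is legal if every one of its sections spans a subspace of dimension at most $k-1$. *)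

(* Defs.v *)
From HB Require Import structures.
From mathcomp Require Import all_boot all_order all_algebra.
Set Implicit Arguments. Unset Strict Implicit. Unset Printing Implicit Defensive.
Import GRing.Theory.
Local Open Scope ring_scope.

Definition infinite_type (T : eqType) : Prop :=
  forall s : seq T, exists x : T, x \notin s.

Section Widgets.
Variables (F : fieldType) (V : lmodType F).

Definition lin_indep (s : seq V) : Prop :=
  forall c : 'I_(size s) -> F,
    \sum_(i < size s) c i *: nth 0 s i = 0 -> forall i, c i = 0.

Definition span_dim_le (s : seq V) (d : nat) : Prop :=
  forall t, subseq t s -> lin_indep t -> (size t <= d)%N.

Definition span_dim_ge (s : seq V) (d : nat) : Prop :=
  exists2 t, subseq t s & lin_indep t /\ (d <= size t)%N.

Definition widget (n : nat) := 'I_n -> V * V.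

(* A section is described by sel : 'I_n -> option bool:
   None = no point of pair i, Some true = p_i^+, Some false = p_i^-. *)
Definition section_points (n : nat) (p : widget n) (sel : 'I_n -> option bool)
  : seq V :=
  pmap (fun i => omap (fun b : bool => if b then (p i).1 else (p i).2) (sel i))
       (enum 'I_n).

Definition all_points (n : nat) (p : widget n) : seq V :=
  flatten [seq [:: (p i).1; (p i).2] | i <- enum 'I_n].

Definition legal (n : nat) (p : widget n) : Prop :=
  forall sel : 'I_n -> option bool, span_dim_le (section_points p sel) n.-1.

Definition full (n : nat) (p : widget n) : Prop :=
  span_dim_ge (all_points p) n.

Definition valid (n : nat) (p : widget n) : Prop := legal p /\ full p.

Definition subwidget (n k : nat) (p : widget n) (f : 'I_k -> 'I_n) : widget k :=
  fun j => p (f j).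

Definition has_legal_subwidget (n : nat) (p : widget n) : Prop :=
  exists k : nat, (1 <= k)%N /\ (k < n)%N /\
    exists f : 'I_k -> 'I_n, injective f /\ legal (subwidget p f).

End Widgets.

(* Main.v *)
Require Import Defs.
From HB Require Import structures.
From mathcomp Require Import all_boot all_order all_algebra zify.
From Stdlib Require Import Classical.
Set Implicit Arguments. Unset Strict Implicit. Unset Printing Implicit Defensive.
Import GRing.Theory.

Section Rado.
Variables (E : finType) (r : {set E} -> nat) (e0 : E).
Hypothesis r_mono : forall S T : {set E}, S \subset T -> r S <= r T.
Hypothesis r_submod : forall S T : {set E}, r (S :|: T) + r (S :&: T) <= r S + r T.
Hypothesis r_card : forall S, r S <= #|S|.

Definition HallR n (B : 'I_n -> {set E}) :=
  forall J : {set 'I_n}, #|J| <= r (\bigcup_(i in J) B i).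

Lemma rado_base n (B : 'I_n -> {set E}) : (forall i, #|B i| <= 1) -> HallR B ->
  exists g : 'I_n -> E, (forall i, g i \in B i) /\ n <= r [set g i | i in 'I_n].
Proof.
move=> H1 HB.
have Hc : forall i, #|B i| = 1.
  move=> i; have := HB [set i]; rewrite big_set1 cards1 => h.
  by have := r_card (B i); have := H1 i; lia.
pose g i := odflt e0 [pick a in B i].
have gB : forall i, g i \in B i.
  move=> i; rewrite /g; case: pickP => [a Ha // | none].
  by have := Hc i; rewrite (eq_card0 none).
exists g; split => //.
have := HB setT; rewrite cardsT card_ord => h; apply: leq_trans h _; apply: r_mono.
apply/subsetP => a /bigcupP [i _ aB]; apply/imsetP; exists i => //.
have /cards1P [b Eb] : #|B i| == 1 by rewrite Hc.
by move: aB (gB i); rewrite Eb !inE => /eqP -> /eqP ->.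
Qed.

Lemma rado n (B : 'I_n -> {set E}) : HallR B ->
  exists g : 'I_n -> E, (forall i, g i \in B i) /\ n <= r [set g i | i in 'I_n].
Proof.
suff: forall m (B : 'I_n -> {set E}), \sum_i #|B i| <= m -> HallR B ->
  exists g : 'I_n -> E, (forall i, g i \in B i) /\ n <= r [set g i | i in 'I_n].
  by apply; apply: leqnn.
elim=> [|m IH] {}B HS HB; case: (boolP [exists i, 1 < #|B i|]) => [/existsP [i0 Hi0] | Hno];
  try (apply: rado_base => // i; move: Hno; rewrite negb_exists => /forallP /(_ i); lia).
  by move: HS; rewrite (bigD1 i0) //=; lia.
have [x [y [xB yB xy]]] := card_gt1P Hi0.
pose Bm z := fun i => if i == i0 then B i :\ z else B i.
have Bsub : forall z i, Bm z i \subset B i.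
  by move=> z i; rewrite /Bm; case: ifP => // _; apply: subsetDl.
have Bsum : forall z, z \in B i0 -> \sum_i #|Bm z i| <= m.
  move=> z zB.
  have s1 : \sum_i #|B i| = #|B i0| + \sum_(i | i != i0) #|B i| by rewrite (bigD1 i0).
  have s2 : \sum_i #|Bm z i| = #|Bm z i0| + \sum_(i | i != i0) #|Bm z i| by rewrite (bigD1 i0).
  rewrite s2; move: HS; rewrite s1 {1}/Bm eqxx (cardsD1 z (B i0)) zB.
  have -> : \sum_(i | i != i0) #|Bm z i| = \sum_(i | i != i0) #|B i|.
    by apply: eq_bigr => i /negbTE; rewrite /Bm => ->.
  lia.
have Bok : forall z, z \in B i0 -> HallR (Bm z) -> exists g : 'I_n -> E,
    (forall i, g i \in B i) /\ n <= r [set g i | i in 'I_n].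
  move=> z zB H; have [g [gB le]] := IH (Bm z) (Bsum z zB) H.
  by exists g; split => // i; apply: (subsetP (Bsub z i)).
case: (classic (HallR (Bm x))) => [H|/not_all_ex_not [J1 /negP lt1]]; first exact: Bok xB H.
case: (classic (HallR (Bm y))) => [H|/not_all_ex_not [J2 /negP lt2]]; first exact: Bok yB H.
rewrite -!ltnNge in lt1 lt2.
have Bne : forall z i, i != i0 -> Bm z i = B i by move=> z i /negbTE; rewrite /Bm => ->.
have inJ : forall z (J : {set 'I_n}), r (\bigcup_(i in J) Bm z i) < #|J| -> i0 \in J.
  move=> z J lt; apply/negPn/negP => nJ; have := HB J.
  have -> : \bigcup_(i in J) B i = \bigcup_(i in J) Bm z i.
    by apply: eq_bigr => i iJ; rewrite Bne //; apply: contraNneq nJ => <-.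
  lia.
have i1 := inJ _ _ lt1; have i2 := inJ _ _ lt2.
have C1 : \bigcup_(i in J1 :|: J2) B i \subset
          (\bigcup_(i in J1) Bm x i) :|: (\bigcup_(i in J2) Bm y i).
  apply/subsetP => a /bigcupP [i /setUP iJ aB].
  case: (eqVneq i i0) => [ei|ne].
    subst i; case: (eqVneq a x) => [eax|nax].
      apply/setUP; right; apply/bigcupP; exists i0 => //.
      by rewrite /Bm eqxx !inE aB andbT -eax in xy *.
    apply/setUP; left; apply/bigcupP; exists i0 => //.
    by rewrite /Bm eqxx !inE aB andbT.
  apply/setUP; case: iJ => iJ; [left|right]; apply/bigcupP; exists i => //;
    by rewrite Bne.
have C2 : \bigcup_(i in J1 :&: J2 :\ i0) B i \subset
          (\bigcup_(i in J1) Bm x i) :&: (\bigcup_(i in J2) Bm y i).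
  apply/subsetP => a /bigcupP [i]; rewrite !inE => /and3P [ne iJ1 iJ2] aB.
  by apply/andP; split; apply/bigcupP; exists i => //; rewrite Bne.
have h1 := HB (J1 :|: J2); have h2 := HB (J1 :&: J2 :\ i0).
have m1 := r_mono C1; have m2 := r_mono C2.
have sm := r_submod (\bigcup_(i in J1) Bm x i) (\bigcup_(i in J2) Bm y i).
have cu := cardsUI J1 J2.
have cd := cardsD1 i0 (J1 :&: J2); rewrite inE i1 i2 /= in cd.
exfalso; have A := leq_trans (leq_add h1 h2) (leq_trans (leq_add m1 m2) sm). move: A lt1 lt2 cu cd. clear. set a1 := #|J1|. set a2 := #|J2|. set a3 := #|J1 :|: J2|. set a4 := #|J1 :&: J2|. set a5 := #|J1 :&: J2 :\ i0|. set b1 := r _. set b2 := r _. lia.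
Qed.
End Rado.

Local Open Scope ring_scope.

Section Kernel.
Variable F : fieldType.

Lemma subspace_mx (N : nat) (P : 'rV[F]_N -> Prop) :
  P 0 -> (forall a u v, P u -> P v -> P (a *: u + v)) ->
  exists K : 'M[F]_N, forall v, (v <= K)%MS <-> P v.
Proof.
move=> P0 Pl.
have step : forall K : 'M[F]_N, (forall v, (v <= K)%MS -> P v) ->
   ~ (forall v, P v -> (v <= K)%MS) ->
   exists K' : 'M[F]_N, (forall v, (v <= K')%MS -> P v) /\ (\rank K < \rank K')%N.
  move=> K HK Hn.
  have [v Pv nvK] : exists2 v, P v & ~ (v <= K)%MS.
    case: (not_all_ex_not _ _ Hn) => v H. have [H1 H2] := imply_to_and _ _ H. by exists v.
  exists (K + v)%MS; split.
    move=> u /sub_addsmxP [[a b] /= ->]; rewrite addrC.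
    have /sub_rVP [c ->] : (b *m v <= v)%MS by apply: submxMl.
    by apply: Pl => //; apply: HK; apply: submxMl.
  suff: (K < K + v)%MS by rewrite ltmxErank => /andP[].
  rewrite ltmxE addsmxSl /=; apply/negP => H.
  by apply: nvK; apply: submx_trans H; apply: addsmxSr.
suff: forall d (K : 'M[F]_N), (forall v, (v <= K)%MS -> P v) ->
   (N - \rank K <= d)%N -> exists K : 'M[F]_N, forall v, (v <= K)%MS <-> P v.
  by move/(_ N 0); apply => [v|]; [rewrite submx0 => /eqP ->|rewrite leq_subr].
elim=> [|d IH] K HK Hd;
  case: (classic (forall v, P v -> (v <= K)%MS)) => [Hall|Hn];
  try by exists K => v; split; [apply: HK | apply: Hall].
- have [K' [_ lt]] := step K HK Hn.
  by have := rank_leq_col K'; move: Hd; rewrite leqn0 subn_eq0; lia.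
- have [K' [HK' lt]] := step K HK Hn.
  by apply: (IH K' HK'); have := rank_leq_col K'; lia.
Qed.
End Kernel.

Section Coords.
Variables (F : fieldType) (V : lmodType F) (I : finType) (pt : I -> V).

Lemma coords : exists x : I -> 'rV[F]_#|I|, forall c : I -> F,
  (\sum_a c a *: pt a == 0) = (\sum_a c a *: x a == 0).
Proof.
pose P (v : 'rV[F]_#|I|) := \sum_(j < #|I|) v 0 j *: pt (enum_val j) = 0.
have [K HK] : exists K : 'M[F]_#|I|, forall v, (v <= K)%MS <-> P v.
  apply: subspace_mx; first by rewrite /P big1 // => j _; rewrite mxE scale0r.
  move=> a u v Pu Pv; rewrite /P.
  under eq_bigr do rewrite !mxE scalerDl -scalerA.
  by rewrite big_split /= -scaler_sumr Pu Pv scaler0 addr0.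
exists (fun a => row (enum_rank a) (cokermx K)) => c.
pose cv := \row_(j < #|I|) c (enum_val j).
have E1 : \sum_a c a *: pt a = \sum_(j < #|I|) cv 0 j *: pt (enum_val j).
  rewrite (big_enum_val (A := predT)) /=.
  by apply: eq_bigr => j _; rewrite mxE.
have E2 : \sum_a c a *: row (enum_rank a) (cokermx K) = cv *m cokermx K.
  rewrite mulmx_sum_row (big_enum_val (A := predT)) /=.
  by apply: eq_bigr => j _; rewrite mxE enum_valK.
rewrite E1 E2 -submxE.
by apply/eqP/idP => [H|/HK //]; apply/HK.
Qed.
End Coords.

Section Rank.
Variables (F : fieldType) (V : lmodType F) (I : finType) (pt : I -> V) (a0 : I).
Variables (N : nat) (x : I -> 'rV[F]_N).
Hypothesis Hx : forall c : I -> F,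
  (\sum_a c a *: pt a == 0) = (\sum_a c a *: x a == 0).

Definition sp (S : {set I}) : 'M[F]_N := (\sum_(a in S) <<x a>>)%MS.
Definition rk (S : {set I}) := \rank (sp S).
Definition Mof (s : seq I) : 'M[F]_(size s, N) := \matrix_(i < size s) x (nth a0 s i).

Lemma sp_subP (S : {set I}) m (Y : 'M[F]_(m, N)) :
  (sp S <= Y)%MS <-> (forall a, a \in S -> (x a <= Y)%MS).
Proof.
split => [/sumsmx_subP H a aS | H]; first by rewrite -(genmxE (x a)); apply: H.
by apply/sumsmx_subP => a aS; rewrite genmxE; apply: H.
Qed.

Lemma x_sp (S : {set I}) a : a \in S -> (x a <= sp S)%MS.
Proof. by move=> aS; apply: (sumsmx_sup a) => //; rewrite genmxE. Qed.

Lemma sp_mono (S T : {set I}) : S \subset T -> (sp S <= sp T)%MS.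
Proof. by move=> /subsetP ST; apply/sp_subP => a /ST; apply: x_sp. Qed.

Lemma rk_mono (S T : {set I}) : S \subset T -> (rk S <= rk T)%N.
Proof. by move=> ST; apply: mxrankS; apply: sp_mono. Qed.

Lemma rk_submod (S T : {set I}) : (rk (S :|: T) + rk (S :&: T) <= rk S + rk T)%N.
Proof.
rewrite /rk -(mxrank_sum_cap (sp S) (sp T)) leq_add //; apply: mxrankS.
  apply/sp_subP => a /setUP [aS|aT].
    by apply: submx_trans (addsmxSl _ _); apply: x_sp.
  by apply: submx_trans (addsmxSr _ _); apply: x_sp.
rewrite sub_capmx; apply/andP; split; apply: sp_mono.
  exact: subsetIl.
exact: subsetIr.
Qed.

Lemma rk_card (S : {set I}) : (rk S <= #|S|)%N.
Proof.
rewrite /rk /sp -sum1_card.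
apply: (big_ind2 (fun (A : 'M[F]_N) k => \rank A <= k)%N).
- by rewrite mxrank0.
- move=> A k B l HA HB; apply: leq_trans (mxrank_adds_leqif A B) _.
  exact: leq_add.
- by move=> a _; rewrite genmxE; apply: rank_leq_row.
Qed.

Lemma Mof_rank s : \rank (Mof s) = rk [set a in s].
Proof.
apply/eqP; rewrite eqn_leq; apply/andP; split; apply: mxrankS.
  apply/row_subP => i; rewrite rowK; apply: x_sp.
  by rewrite inE mem_nth.
apply/sp_subP => a; rewrite inE => /(nthP a0) [i lti <-].
by have := row_sub (Ordinal lti) (Mof s); rewrite rowK.
Qed.


Lemma regroup (W : lmodType F) (f : I -> W) s (c : 'I_(size s) -> F) :
  \sum_(i < size s) c i *: f (nth a0 s i) =
  \sum_a (\sum_(i < size s | nth a0 s i == a) c i) *: f a.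
Proof.
under [RHS]eq_bigr => a _ do rewrite big_mkcond scaler_suml.
rewrite exchange_big /=; apply: eq_bigr => i _.
rewrite (bigD1 (nth a0 s i)) //= eqxx big1 ?addr0 // => a.
by rewrite eq_sym => /negbTE ->; rewrite scale0r.
Qed.

Lemma lin_indep_map s : lin_indep (map pt s) <-> row_free (Mof s).
Proof.
rewrite /lin_indep size_map.
have key : forall c : 'I_(size s) -> F,
    (\sum_i c i *: nth 0 (map pt s) i == 0) = ((\row_i c i) *m Mof s == 0).
  move=> c.
  have -> : \sum_i c i *: nth 0 (map pt s) i = \sum_i c i *: pt (nth a0 s i).
    by apply: eq_bigr => i _; rewrite (nth_map a0).
  rewrite regroup Hx -regroup mulmx_sum_row.
  by congr (_ == 0); apply: eq_bigr => i _; rewrite mxE rowK.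
split.
- move=> H; apply/negPn/negP => nf.
  have : kermx (Mof s) != 0.
    rewrite -mxrank_eq0 mxrank_ker subn_eq0 -ltnNge.
    by have := rank_leq_row (Mof s); move: nf; rewrite /row_free; lia.
  case/rowV0Pn => v /sub_kermxP vK; apply/negP; rewrite negbK.
  have Ev : \row_i v 0 i = v by apply/rowP => i; rewrite mxE.
  have Hv := H (fun i => v 0 i); apply/eqP/rowP => i; rewrite mxE; apply: Hv.
  by apply/eqP; rewrite key Ev vK.
- move=> fr c Hc i.
  have : (\row_i c i) *m Mof s == 0 by rewrite -key Hc.
  by rewrite mulmx_free_eq0 // => /eqP /rowP /(_ i); rewrite !mxE.
Qed.

Lemma greedy s : exists2 s', subseq s' s &
  row_free (Mof s') /\ (sp [set a in s] <= sp [set a in s'])%MS.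
Proof.
elim: s => [|a s [s' ss' [fr sub]]].
  exists [::] => //; split; first by rewrite /row_free /= -leqn0 rank_leq_row.
  by apply/sp_subP => a; rewrite inE.
case: (boolP (x a <= sp [set b in s'])%MS) => xa.
  exists s'; first exact: subseq_trans ss' (subseq_cons s a).
  split => //; apply/sp_subP => b; rewrite inE in_cons => /orP [/eqP -> // | bs].
  by apply: submx_trans sub; apply: x_sp; rewrite inE.
exists (a :: s'); first by rewrite /= eqxx.
have sub' : (sp [set b in s'] <= sp [set b in a :: s'])%MS.
  by apply: sp_mono; apply/subsetP => b; rewrite !inE => bs; rewrite bs orbT.
split.
  have lt : (sp [set b in s'] < sp [set b in a :: s'])%MS.
    rewrite ltmxE sub' /=; apply/negP => H; move/negP: xa; apply.
    by apply: submx_trans H; apply: x_sp; rewrite !inE eqxx.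
  move: lt; rewrite ltmxErank => /andP [_].
  rewrite /row_free Mof_rank -/(rk _) -/(rk _) -Mof_rank (eqP fr).
  have := rank_leq_row (Mof (a :: s')); rewrite Mof_rank /=; lia.
apply/sp_subP => b; rewrite inE in_cons => /orP [/eqP -> | bs].
  by apply: x_sp; rewrite !inE eqxx.
apply: submx_trans sub'; apply: submx_trans sub; apply: x_sp; rewrite inE //.
Qed.

Lemma subseq_map_inv (t : seq V) s :
  subseq t (map pt s) -> exists2 s', subseq s' s & t = map pt s'.
Proof.
move/subseqP => [m sz ->]; exists (mask m s); first exact: mask_subseq.
by rewrite map_mask.
Qed.

Lemma dim_le s d : span_dim_le (map pt s) d <-> (rk [set a in s] <= d)%N.
Proof.
split.
- move=> H; have [s' ss' [fr sub]] := greedy s.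
  have := H (map pt s') (map_subseq pt ss') (proj2 (lin_indep_map s') fr).
  rewrite size_map => le; apply: leq_trans (mxrankS sub) _.
  by rewrite -/(rk _) -Mof_rank (eqP fr).
- move=> H t /subseq_map_inv [s' ss' ->] /lin_indep_map fr.
  rewrite size_map -(eqP fr) Mof_rank; apply: leq_trans H; apply: rk_mono.
  by apply/subsetP => b; rewrite !inE => /(mem_subseq ss').
Qed.

Lemma dim_ge s d : span_dim_ge (map pt s) d -> (d <= rk [set a in s])%N.
Proof.
case=> t /subseq_map_inv [s' ss' ->] [/lin_indep_map fr]; rewrite size_map => le.
apply: leq_trans le _; rewrite -(eqP fr) Mof_rank; apply: rk_mono.
by apply/subsetP => b; rewrite !inE => /(mem_subseq ss').
Qed.

End Rank.

Local Close Scope ring_scope.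

Section Main.
Variables (F : fieldType) (V : lmodType F).

Definition ptw n (p : widget V n) (ab : 'I_n * bool) : V :=
  if ab.2 then (p ab.1).1 else (p ab.1).2.

Definition secidx n (sel : 'I_n -> option bool) : seq ('I_n * bool) :=
  pmap (fun i => omap (fun b => (i, b)) (sel i)) (enum 'I_n).

Lemma section_eq n (p : widget V n) sel :
  section_points p sel = map (ptw p) (secidx sel).
Proof.
rewrite /section_points /secidx; elim: (enum 'I_n) => [|i s IH] //=.
by case: (sel i) => [b|] //=; rewrite IH.
Qed.

Lemma mem_secidx n (sel : 'I_n -> option bool) i b :
  ((i, b) \in secidx sel) = (sel i == Some b).
Proof.
rewrite /secidx mem_pmap; apply/mapP/eqP => [[j _]|E].
  by case E: (sel j) => [c|] //= [-> ->].
by exists i; rewrite ?mem_enum // E.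
Qed.

Definition allidx n : seq ('I_n * bool) :=
  flatten [seq [:: (i, true); (i, false)] | i <- enum 'I_n].

Lemma all_eq n (p : widget V n) : all_points p = map (ptw p) (allidx n).
Proof.
rewrite /all_points /allidx; elim: (enum 'I_n) => [|i s IH] //=.
by rewrite IH.
Qed.

Lemma allidx_setT n : [set a in allidx n] = setT.
Proof.
apply/setP => [[i b]]; rewrite !inE; apply/flattenP.
exists [:: (i, true); (i, false)]; first by apply/mapP; exists i; rewrite ?mem_enum.
by case: b; rewrite !inE eqxx ?orbT.
Qed.

Lemma subsec_eq n k (p : widget V n) (f : 'I_k -> 'I_n) sel :
  section_points (subwidget p f) sel =
  map (ptw p) (map (fun jb : 'I_k * bool => (f jb.1, jb.2)) (secidx sel)).
Proof. by rewrite section_eq -map_comp; apply: eq_map => [[j b]]. Qed.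

End Main.

Theorem corollary1p1 (F : fieldType) (HF : infinite_type F)
  (V : lmodType F) (n : nat) (Hn : (1 <= n)%N) (p : widget V n) :
  valid p <-> full p /\ has_legal_subwidget p.
Proof.
pose a0 : 'I_n * bool := (Ordinal Hn, true).
have [x Hx] := coords (ptw p).
pose r := rk x.
have rmono : forall S T : {set 'I_n * bool}, S \subset T -> r S <= r T.
  by move=> S T; apply: rk_mono.
have rsub : forall S T : {set 'I_n * bool}, r (S :|: T) + r (S :&: T) <= r S + r T.
  by move=> S T; apply: rk_submod.
have rcard : forall S : {set 'I_n * bool}, r S <= #|S|.
  by move=> S; apply: rk_card.
have DL := dim_le a0 Hx.
have DG := dim_ge a0 Hx.
have Hfull : full p -> n <= r setT.
  by rewrite /full all_eq => /DG; rewrite allidx_setT.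
split.
- move=> [Hl Hf]; split => //.
  have Hfr := Hfull Hf.
  have HT : forall b : 'I_n -> bool, r [set (i, b i) | i in 'I_n] <= n.-1.
    move=> b; have := Hl (fun i => Some (b i)); rewrite section_eq DL => h.
    apply: leq_trans h; apply: rmono; apply/subsetP => a /imsetP [i _ ->].
    by rewrite inE mem_secidx.
  pose B (i : 'I_n) : {set 'I_n * bool} := [set (i, true); (i, false)].
  have [J HJ] : exists J : {set 'I_n}, r (\bigcup_(i in J) B i) < #|J|.
    apply: NNPP => Hne.
    have HR : HallR r B.
      by move=> J; rewrite leqNgt; apply/negP => h; apply: Hne; exists J.
    have [g [gB le]] := rado a0 rmono rsub rcard HR.
    have := HT (fun i => (g i).2).
    have -> : [set (i, (g i).2) | i in 'I_n] = [set g i | i in 'I_n].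
      apply: eq_imset => i; move: (gB i); rewrite !inE.
      by case: (g i) => j c /orP [] /eqP [-> _].
    by move=> h; have := leq_trans le h; have := Hn; lia.
  have k1 : 0 < #|J| by apply: leq_ltn_trans HJ.
  have kn : #|J| < n.
    rewrite ltn_neqAle; have := max_card J; rewrite card_ord => ->; rewrite andbT.
    apply/eqP => Ek.
    have JT : J = setT by apply/eqP; rewrite eqEcard subsetT cardsT card_ord /= Ek.
    move: HJ; rewrite JT.
    have -> : \bigcup_(i in [set: 'I_n]) B i = setT.
      apply/setP => [[i b]]; rewrite inE; apply/bigcupP; exists i => //.
      by rewrite !inE; case: b; rewrite eqxx ?orbT.
    by rewrite cardsT card_ord => h; have := leq_ltn_trans Hfr h; rewrite ltnn.
  exists #|J|; split => //; split => //.
  exists (@enum_val _ (pred_of_set J)); split; first exact: enum_val_inj.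
  move=> sel; rewrite subsec_eq DL; rewrite -ltnS prednK //.
  apply: leq_ltn_trans HJ; apply: rmono; apply/subsetP => a.
  rewrite inE => /mapP [[j b] _ ->] /=; apply/bigcupP; exists (enum_val j).
    exact: enum_valP.
  by rewrite !inE; case: b; rewrite eqxx ?orbT.
- move=> [Hf [k [k1 [kn [f [finj Hleg]]]]]]; split => //.
  move=> sel; rewrite section_eq DL.
  set S := [set a in secidx sel].
  pose R := [set f j | j in 'I_k].
  pose S1 := [set a in S | a.1 \in R].
  pose S2 := [set a in S | a.1 \notin R].
  have ES : S = S1 :|: S2.
    by apply/setP => a; rewrite !inE -andb_orr orbN andbT.
  have h1 : r S1 <= k.-1.
    have := Hleg (fun j => sel (f j)); rewrite subsec_eq DL => h.
    apply: leq_trans h; apply: rmono; apply/subsetP => [[i b]].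
    rewrite !inE /= => /andP [iS /imsetP [j _ Ei]].
    apply/mapP; exists (j, b); last by rewrite /= Ei.
    by rewrite mem_secidx -Ei -mem_secidx.
  have h2 : #|S2| <= n - k.
    have inj : {in S2 &, injective (fun a : 'I_n * bool => a.1)}.
      move=> [i b] [i' b']; rewrite !inE /= => /andP [s1 _] /andP [s2 _] Ei.
      move: s1 s2; rewrite Ei !mem_secidx => /eqP -> /eqP [->] //.
    rewrite -(card_in_imset inj).
    have sub : [set a.1 | a in S2] \subset ~: R.
      by apply/subsetP => i /imsetP [a]; rewrite !inE => /andP [_ aR] ->.
    apply: leq_trans (subset_leq_card sub) _.
    have := cardsC R; rewrite card_ord card_imset // card_ord.
    by move: kn; lia.
  have h3 := rcard S2.
  have h4 := rsub S1 S2.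
  rewrite ES -/r; move: h1 h2 h3 h4 k1 kn; set u := r S1; set v := r S2; set w := r (S1 :|: S2); set z := r (S1 :&: S2); set c := #|S2|; lia.
Qed.
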